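(* Let $\mathbf S=\{S^m\}$, $\mathbf Z=\{Z_m\}$ be a general source with general two-sided information and $d_m$ a general sequence of distortion functions. Then $\underline{R_{\mathbf S|\mathbf Z}}(D_E)\le\underline H(\mathbf S|\mathbf Z)$ for every $D_E\ge D'_{E,\min}$, where $D'_{E,\min}=\inf_{\mathbf g}\overline D(\mathbf S,\mathbf g(\mathbf S))$. Moreover, if $\check{\mathcal S}^m=\mathcal S^m$, $d_m(s^m,\check s^m)=1\{s^m\ne\check s^m\}$ and $D_E=0$, then $\underline{R_{\mathbf S|\mathbf Z}}(0)=\underline H(\mathbf S|\mathbf Z)$.
   Context: A general source with general two-sided information: for each $m\ge1$, $(S^m,Z_m)$ is a pair of random variables with an arbitrary joint distribution $P_{S^mZ_m}$ on a finite set $\mathcal S^m\times\mathcal Z_m$; $\check{\mathcal S}^m$ are finite reconstruction sets and $d_m:\mathcal S^m\times\check{\mathcal S}^m\to[0,\infty)$ is an arbitrary sequence of distortion functions. All logarithms are base 2. For real random variables $\{B_m\}$: $\operatorname{p\text{-}liminf}_mB_m=\sup\{r:\lim_m\mathbb P(B_m<r)=0\}$, $\operatorname{p\text{-}limsup}_mB_m=\inf\{r:\lim_m\mathbb P(B_m>r)=0\}$. Definitions: $\underline H(\mathbf S|\mathbf Z)=\operatorname{p\text{-}liminf}_m\frac1m\log\frac{1}{P_{S^m|Z_m}(S^m|Z_m)}$; $\overline I(\mathbf S;\tilde{\mathbf S}|\mathbf Z)=\operatorname{p\text{-}limsup}_m\frac1m\log\frac{P_{\tilde S^m|S^mZ_m}(\tilde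 S^m|S^m,Z_m)}{P_{\tilde S^m|Z_m}(\tilde S^m|Z_m)}$; $\underline D(\mathbf S,\tilde{\mathbf S})=\inf\{d:\liminf_m\mathbb P[d_m(S^m,\tilde S^m)\ge d]<1\}$ and $\overline D(\mathbf S,\tilde{\mathbf S})=\operatorname{p\text{-}limsup}_m d_m(S^m,\tilde S^m)$. $\mathbf g$ ranges over sequences of functions $g^m:\mathcal S^m\to\check{\mathcal S}^m$, and $\mathbf g(\mathbf S)=\{g^m(S^m)\}$. With $D_{E,\min}=\inf_{\mathbf g}\underline D(\mathbf S,\mathbf g(\mathbf S))$, the lossy-equivocation is $\underline{R_{\mathbf S|\mathbf Z}}(D_E)=\inf_{P_{\check{\mathbf S}|\mathbf S\mathbf Z}:\underline D(\mathbf S,\check{\mathbf S})\le D_E}\overline I(\mathbf S;\check{\mathbf S}|\mathbf Z)$ for $D_E\ge D_{E,\min}$ (infimum over sequences of conditional distributions $P_{\check S^m|S^mZ_m}$ on $\check{\mathcal S}^m$) and $\underline{R_{\mathbf S|\mathbf Z}}(D_E)=+\infty$ for $D_E<D_{E,\min}$. *)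

(* Defs.v *)
From mathcomp Require Import all_boot.
From Stdlib Require Import Reals ClassicalEpsilon.
Set Implicit Arguments.
Unset Strict Implicit.
Unset Printing Implicit Defensive.

Local Open Scope R_scope.

Inductive ER := ERfin (r : R) | ERpinf | ERninf.

Definition ER_le (x y : ER) : Prop :=
  match x, y with
  | ERninf, _ => True
  | _, ERpinf => True
  | ERfin a, ERfin b => a <= b
  | _, _ => False
  end.

Definition ER_lt (x y : ER) : Prop := ER_le x y /\ x <> y.

Definition ER_opp (x : ER) : ER :=
  match x with ERfin r => ERfin (- r) | ERpinf => ERninf | ERninf => ERpinf end.

(* supremum of a set of extended reals (sup of the empty set is -oo) *)
Definition ER_sup (A : ER -> Prop) : ER :=
  if excluded_middle_informative
       (A ERpinf \/ ~ bound (fun r => A (ERfin r)))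
  then ERpinf
  else if excluded_middle_informative (exists r, A (ERfin r))
  then ERfin (epsilon (inhabits 0) (is_lub (fun r => A (ERfin r))))
  else ERninf.

(* infimum of a set of extended reals (inf of the empty set is +oo) *)
Definition ER_inf (A : ER -> Prop) : ER :=
  ER_opp (ER_sup (fun x => A (ER_opp x))).

Definition ER_liminf (a : nat -> R) : ER :=
  ER_sup (fun x => exists N : nat,
            x = ER_inf (fun y => exists m : nat, (N <= m)%nat /\ y = ERfin (a m))).

Definition log2 (x : R) : R := ln x / ln 2.

Definition sumR (T : finType) (f : T -> R) : R := \big[Rplus/0]_(w : T) f w.

Definition prob_lt (T : finType) (mu B : T -> R) (r : R) : R :=
  sumR (fun w => if Rlt_dec (B w) r then mu w else 0).
Definition prob_gt (T : finType) (mu B : T -> R) (r : R) : R :=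
  sumR (fun w => if Rlt_dec r (B w) then mu w else 0).
Definition prob_ge (T : finType) (mu B : T -> R) (r : R) : R :=
  sumR (fun w => if Rle_dec r (B w) then mu w else 0).

(* p-liminf / p-limsup, given the sequences m |-> P[B_m < r] resp. P[B_m > r] *)
Definition p_liminf (plt : nat -> R -> R) : ER :=
  ER_sup (fun x => exists r, x = ERfin r /\ Un_cv (fun m => plt m r) 0).
Definition p_limsup (pgt : nat -> R -> R) : ER :=
  ER_inf (fun x => exists r, x = ERfin r /\ Un_cv (fun m => pgt m r) 0).

(* S m = alphabet of S^m, Z m = alphabet of Z_m, Sc m = reconstruction set,
   P m s z = P_{S^m Z_m}(s,z), d m = distortion function d_m. *)

Definition is_pmf (S Z : nat -> finType) (P : forall m, S m -> Z m -> R) : Prop :=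
  forall m, (forall s z, 0 <= P m s z) /\ sumR (fun w : (S m * Z m)%type => P m w.1 w.2) = 1.

Definition PZ (S Z : nat -> finType) (P : forall m, S m -> Z m -> R) m (z : Z m) : R :=
  sumR (fun s : S m => P m s z).

Definition Hlow (S Z : nat -> finType) (P : forall m, S m -> Z m -> R) : ER :=
  p_liminf (fun m r =>
    prob_lt (fun w : (S m * Z m)%type => P m w.1 w.2)
            (fun w => / INR m * log2 (/ (P m w.1 w.2 / PZ P w.2))) r).

Definition is_channel (S Z Sc : nat -> finType)
  (W : forall m, Sc m -> S m -> Z m -> R) : Prop :=
  forall m, (forall c s z, 0 <= W m c s z) /\
            (forall s z, sumR (fun c : Sc m => W m c s z) = 1).

Definition Qj (S Z Sc : nat -> finType) (P : forall m, S m -> Z m -> R)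
  (W : forall m, Sc m -> S m -> Z m -> R) m (w : (Sc m * (S m * Z m))%type) : R :=
  W m w.1 w.2.1 w.2.2 * P m w.2.1 w.2.2.

Definition PcZ (S Z Sc : nat -> finType) (P : forall m, S m -> Z m -> R)
  (W : forall m, Sc m -> S m -> Z m -> R) m (c : Sc m) (z : Z m) : R :=
  sumR (fun s : S m => W m c s z * P m s z) / PZ P z.

Definition Iup (S Z Sc : nat -> finType) (P : forall m, S m -> Z m -> R)
  (W : forall m, Sc m -> S m -> Z m -> R) : ER :=
  p_limsup (fun m r =>
    prob_gt (Qj P W (m:=m))
      (fun w => / INR m * log2 (W m w.1 w.2.1 w.2.2 / PcZ P W w.1 w.2.2)) r).

Definition Dlow (S Z Sc : nat -> finType) (P : forall m, S m -> Z m -> R)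
  (d : forall m, S m -> Sc m -> R)
  (W : forall m, Sc m -> S m -> Z m -> R) : ER :=
  ER_inf (fun x => exists D, x = ERfin D /\
    ER_lt (ER_liminf (fun m =>
             prob_ge (Qj P W (m:=m)) (fun w => d m w.2.1 w.1) D)) (ERfin 1)).

Definition Dup (S Z Sc : nat -> finType) (P : forall m, S m -> Z m -> R)
  (d : forall m, S m -> Sc m -> R)
  (W : forall m, Sc m -> S m -> Z m -> R) : ER :=
  p_limsup (fun m r => prob_gt (Qj P W (m:=m)) (fun w => d m w.2.1 w.1) r).

Definition det_channel (S Z Sc : nat -> finType) (g : forall m, S m -> Sc m)
  : forall m, Sc m -> S m -> Z m -> R :=
  fun m c s _ => if c == g m s then 1 else 0.

Definition DEmin (S Z Sc : nat -> finType) (P : forall m, S m -> Z m -> R)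
  (d : forall m, S m -> Sc m -> R) : ER :=
  ER_inf (fun x => exists g : forall m, S m -> Sc m,
            x = Dlow P d (det_channel (Z := Z) g)).

Definition DEmin' (S Z Sc : nat -> finType) (P : forall m, S m -> Z m -> R)
  (d : forall m, S m -> Sc m -> R) : ER :=
  ER_inf (fun x => exists g : forall m, S m -> Sc m,
            x = Dup P d (det_channel (Z := Z) g)).

Definition Rlow (S Z Sc : nat -> finType) (P : forall m, S m -> Z m -> R)
  (d : forall m, S m -> Sc m -> R) (DE : R) : ER :=
  if excluded_middle_informative (ER_lt (ERfin DE) (DEmin P d)) then ERpinf
  else ER_inf (fun x => exists W : forall m, Sc m -> S m -> Z m -> R,
         is_channel W /\ ER_le (Dlow P d W) (ERfin DE) /\ x = Iup P W).

Definition hamming (S : nat -> finType) : forall m, S m -> S m -> R :=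
  fun m s c => if s == c then 0 else 1.

(* Main.v *)
From HB Require Import structures.
Require Import Defs.
From mathcomp Require Import all_boot zify.
From Stdlib Require Import Reals Lra Lia ClassicalEpsilon Classical.
Local Open Scope R_scope.
Set Warnings "-notation-overridden".
Set Implicit Arguments.
Unset Strict Implicit.

HB.instance Definition _ := Monoid.isComLaw.Build R 0 Rplus
  (fun a b c => esym (Rplus_assoc a b c)) Rplus_comm Rplus_0_l.

Section Sums.
Variable T : finType.
Implicit Types f g : T -> R.

Lemma sumR_ext f g : (forall w, f w = g w) -> sumR f = sumR g.
Proof. by move=> H; apply: eq_bigr. Qed.

Lemma sumR_le f g : (forall w, f w <= g w) -> sumR f <= sumR g.
Proof.
move=> H; rewrite /sumR; apply: (big_ind2 (fun a b => a <= b)) => //.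
- lra.
- move=> ? ? ? ? ? ?; lra.
Qed.

Lemma sumR_ge0 f : (forall w, 0 <= f w) -> 0 <= sumR f.
Proof.
move=> H; rewrite /sumR; apply: (big_ind (fun a => 0 <= a)) => //.
- lra.
- move=> ? ? ? ?; lra.
Qed.

Lemma sumR_plus f g : sumR (fun w => f w + g w) = sumR f + sumR g.
Proof. by rewrite /sumR big_split. Qed.

Lemma sumR_scal c f : sumR (fun w => c * f w) = c * sumR f.
Proof.
rewrite /sumR; apply: (big_ind2 (fun a b => a = c * b)) => //.
- ring.
- move=> ? ? ? ? -> ->; ring.
Qed.

Lemma sumR_0 : sumR (fun _ : T => 0) = 0.
Proof. by rewrite /sumR big1. Qed.

Lemma sumR_term f a : (forall w, 0 <= f w) -> f a <= sumR f.
Proof.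
move=> H; rewrite /sumR (bigD1 a) //=.
have : 0 <= \big[Rplus/0]_(i | i != a) f i.
  apply: (big_ind (fun a => 0 <= a)) => //; [lra| move=> ? ? ? ?; lra].
simpl; lra.
Qed.

Lemma sumR_single (a : T) (v : R) :
  sumR (fun w => if w == a then v else 0) = v.
Proof.
rewrite /sumR (bigD1 a) //= eqxx big1 ?Rplus_0_r //.
by move=> i /negbTE ->.
Qed.
End Sums.

Lemma sumR_pair (A B : finType) (F : A -> B -> R) :
  sumR (fun p : (A * B)%type => F p.1 p.2) = sumR (fun a => sumR (fun b => F a b)).
Proof. by rewrite /sumR pair_big. Qed.

Lemma sumR_swap (A B : finType) (F : A -> B -> R) :
  sumR (fun a => sumR (fun b => F a b)) = sumR (fun b => sumR (fun a => F a b)).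
Proof. by rewrite /sumR exchange_big. Qed.
Lemma ER_le_pinf x : ER_le x ERpinf.
Proof. by case: x. Qed.
Lemma ER_le_refl x : ER_le x x.
Proof. case: x => //= r; lra. Qed.
Lemma ER_le_trans x y z : ER_le x y -> ER_le y z -> ER_le x z.
Proof. case: x; case: y; case: z => //= *; lra. Qed.
Lemma ER_le_total x y : ER_le x y \/ ER_le y x.
Proof. case: x; case: y => //=; try tauto; move=> a b; lra. Qed.
Lemma ER_opp_opp x : ER_opp (ER_opp x) = x.
Proof. by case: x => //= r; rewrite Ropp_involutive. Qed.
Lemma ER_le_opp x y : ER_le (ER_opp x) (ER_opp y) <-> ER_le y x.
Proof. case: x; case: y => //= *; split; lra. Qed.

Lemma lub_exists (E : R -> Prop) : bound E -> (exists r, E r) ->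
  is_lub E (epsilon (inhabits 0) (is_lub E)).
Proof.
move=> hb he; apply: epsilon_spec.
destruct (completeness E hb he) as [l hl]; by exists l.
Qed.

Lemma le_ER_sup (A : ER -> Prop) x : A x -> ER_le x (ER_sup A).
Proof.
move=> Ax; rewrite /ER_sup.
destruct excluded_middle_informative as [hy|hn]; first exact: ER_le_pinf.
destruct excluded_middle_informative as [he|hne].
- have hb : bound (fun r => A (ERfin r)).
    apply: NNPP => hb; apply: hn; by right.
  have [hub _] := lub_exists hb he.
  case: x Ax => [r Ar|Ap|_] //=; first by apply: hub.
  by apply: hn; left.
- case: x Ax => [r Ar|Ap|_] //=; first by case: hne; exists r.
  by apply: hn; left.
Qed.

Lemma ER_sup_le (A : ER -> Prop) y :
  (forall x, A x -> ER_le x y) -> ER_le (ER_sup A) y.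
Proof.
move=> H; case: y H => [c||] H; last 2 first.
- exact: ER_le_pinf.
- rewrite /ER_sup.
  destruct excluded_middle_informative as [[Ap|hb]|hn].
  + by have := H _ Ap.
  + exfalso; apply: hb; exists 0 => r Ar; by have := H _ Ar.
  destruct excluded_middle_informative as [[r Ar]|hz] => //=.
  by have := H _ Ar.
rewrite /ER_sup.
destruct excluded_middle_informative as [[Ap|hb]|hn].
- by have := H _ Ap.
- exfalso; apply: hb; exists c => r Ar; by have := H _ Ar.
destruct excluded_middle_informative as [he|hz] => //=.
have hb : bound (fun r => A (ERfin r)) by exists c => r Ar; have := H _ Ar.
have [_ hl] := lub_exists hb he; apply: hl => r Ar; by have := H _ Ar.
Qed.

Lemma ER_sup_approx (A : ER -> Prop) c :
  (forall eps, 0 < eps -> exists x, A x /\ ER_le (ERfin (c - eps)) x) ->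
  ER_le (ERfin c) (ER_sup A).
Proof.
move=> H; rewrite /ER_sup.
destruct excluded_middle_informative as [hy|hn] => //.
have notp : ~ A ERpinf by move=> Ap; apply: hn; left.
destruct excluded_middle_informative as [he|hne].
- have hb : bound (fun r => A (ERfin r)).
    apply: NNPP => hb; apply: hn; by right.
  have [hub _] := lub_exists hb he.
  set l := epsilon _ _ in hub *.
  simpl; apply: Rnot_lt_le => hlt.
  have [x [Ax hx]] := H ((c - l)/2) ltac:(lra).
  case: x Ax hx => //= a Aa ha.
  have := hub a Aa; lra.
- exfalso; have [x [Ax hx]] := H 1 Rlt_0_1.
  case: x Ax hx => //= a Aa _; by apply: hne; exists a.
Qed.

Lemma ER_inf_le (A : ER -> Prop) x : A x -> ER_le (ER_inf A) x.
Proof.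
move=> Ax; rewrite /ER_inf -(ER_opp_opp x) ER_le_opp.
apply: le_ER_sup; by rewrite ER_opp_opp.
Qed.

Lemma le_ER_inf (A : ER -> Prop) y :
  (forall x, A x -> ER_le y x) -> ER_le y (ER_inf A).
Proof.
move=> H; rewrite /ER_inf -(ER_opp_opp y) ER_le_opp.
apply: ER_sup_le => z Az; rewrite -(ER_opp_opp z) ER_le_opp; exact: H.
Qed.

Lemma ER_inf_approx (A : ER -> Prop) c :
  (forall eps, 0 < eps -> exists x, A x /\ ER_le x (ERfin (c + eps))) ->
  ER_le (ER_inf A) (ERfin c).
Proof.
move=> H; rewrite /ER_inf.
have -> : ERfin c = ER_opp (ERfin (- c)) by rewrite /= Ropp_involutive.
rewrite ER_le_opp; apply: ER_sup_approx => eps heps.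
have [x [Ax hx]] := H eps heps; exists (ER_opp x); split.
  by rewrite ER_opp_opp.
have -> : ERfin (- c - eps) = ER_opp (ERfin (c + eps)) by rewrite /=; f_equal; ring.
by rewrite ER_le_opp.
Qed.

Lemma ER_inf_below (A : ER -> Prop) c D :
  ER_le (ER_inf A) (ERfin c) -> c < D -> exists x, A x /\ ER_le x (ERfin D).
Proof.
move=> H hcD; apply: NNPP => hn.
have : ER_le (ERfin D) (ER_inf A).
  apply: le_ER_inf => x Ax; case: (ER_le_total x (ERfin D)) => // h.
  by exfalso; apply: hn; exists x.
move=> h; have := ER_le_trans h H => /=; lra.
Qed.

Lemma ER_le_antisym x y : ER_le x y -> ER_le y x -> x = y.
Proof. case: x; case: y => //= a b h1 h2; f_equal; lra. Qed.

Lemma ln2_pos : 0 < ln 2.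
Proof. have := ln_lt_2; lra. Qed.

Lemma ln_le' x y : 0 < x -> x <= y -> ln x <= ln y.
Proof.
move=> hx [h|->]; last lra.
by apply: Rlt_le; apply: ln_increasing.
Qed.

Lemma invINR_ge0 m : 0 <= / INR m.
Proof.
case: m => [|m]; first by rewrite /= Rinv_0; lra.
apply: Rlt_le; apply: Rinv_0_lt_compat; apply: lt_0_INR; lia.
Qed.

Lemma dens_mono m a b : 0 < a -> a <= b ->
  / INR m * log2 a <= / INR m * log2 b.
Proof.
move=> ha hab; apply: Rmult_le_compat_l; first exact: invINR_ge0.
rewrite /log2 /Rdiv; apply: Rmult_le_compat_r.
  by apply: Rlt_le; apply: Rinv_0_lt_compat; exact: ln2_pos.
exact: ln_le'.
Qed.

Lemma INR_pos m : (1 <= m)%nat -> 0 < INR m.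
Proof. move=> h; apply: lt_0_INR; lia. Qed.

Lemma dens_lt m b r : (1 <= m)%nat -> 0 < b -> r < / INR m * log2 b ->
  exp (INR m * (r * ln 2)) < b.
Proof.
move=> hm hb h.
have hM := INR_pos hm; have hl := ln2_pos.
rewrite -(exp_ln b) //; apply: exp_increasing.
have : INR m * r < log2 b.
  have -> : log2 b = INR m * (/ INR m * log2 b) by field; lra.
  by apply: Rmult_lt_compat_l.
rewrite /log2 => h2.
have -> : ln b = ln b / ln 2 * ln 2 by field; lra.
have -> : INR m * (r * ln 2) = (INR m * r) * ln 2 by ring.
by apply: Rmult_lt_compat_r.
Qed.

Lemma dens_le m b r : (1 <= m)%nat -> 0 < b -> / INR m * log2 b <= r ->
  b <= exp (INR m * (r * ln 2)).
Proof.
move=> hm hb h; apply: Rnot_lt_le => h2.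
have hM := INR_pos hm; have hl := ln2_pos.
have : ln (exp (INR m * (r * ln 2))) < ln b by apply: ln_increasing => //; exact: exp_pos.
rewrite ln_exp => h3.
have : INR m * r < log2 b.
  rewrite /log2; apply: (Rmult_lt_reg_r (ln 2)) => //.
  have -> : ln b / ln 2 * ln 2 = ln b by field; lra.
  lra.
move=> h4.
have : r < / INR m * log2 b.
  apply: (Rmult_lt_reg_l (INR m)) => //.
  have -> : INR m * (/ INR m * log2 b) = log2 b by field; lra.
  done.
lra.
Qed.

Lemma dens_ge m b t : (1 <= m)%nat -> 0 < b -> t <= / INR m * log2 b ->
  exp (INR m * (t * ln 2)) <= b.
Proof.
move=> hm hb [h|h].
  by apply: Rlt_le; apply: dens_lt.
have hM := INR_pos hm; have hl := ln2_pos.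
rewrite -(exp_ln b) //; right; f_equal.
rewrite h /log2; field; lra.
Qed.

Lemma cv_exp_neg k : k < 0 -> Un_cv (fun n => exp (INR n * k)) 0.
Proof.
move=> hk eps heps.
have [N hN] := INR_archimed (- k) (/ eps) ltac:(lra).
exists N => n hn; rewrite /R_dist Rminus_0_r Rabs_pos_eq; last exact: (Rlt_le _ _ (exp_pos _)).
have hnN : INR N <= INR n by apply: le_INR.
have hpos : 0 < INR n * (- k).
  have := Rinv_0_lt_compat eps heps.
  have : INR N * (- k) <= INR n * (- k) by apply: Rmult_le_compat_r; lra.
  lra.
have h1 := exp_ineq1 (INR n * (- k)) ltac:(lra).
have h2 : / eps < exp (INR n * - k).
  have : INR N * (- k) <= INR n * (- k) by apply: Rmult_le_compat_r; lra.
  lra.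
have -> : INR n * k = - (INR n * - k) by ring.
rewrite exp_Ropp.
rewrite -(Rinv_inv eps).
apply: Rinv_lt_contravar => //.
apply: Rmult_lt_0_compat; [exact: Rinv_0_lt_compat | exact: exp_pos].
Qed.

Lemma cv_squeeze (u v : nat -> R) :
  (forall n, (1 <= n)%nat -> 0 <= u n <= v n) -> Un_cv v 0 -> Un_cv u 0.
Proof.
move=> H hv eps heps; have [N hN] := hv eps heps.
exists (S N) => n hn; have := hN n ltac:(lia).
have := H n ltac:(lia).
rewrite /R_dist !Rminus_0_r => hb.
rewrite !Rabs_pos_eq; lra.
Qed.

Lemma cv_const0 (u : nat -> R) : (forall n, u n = 0) -> Un_cv u 0.
Proof.
move=> H eps heps; exists O => n _; rewrite H /R_dist Rminus_0_r Rabs_R0; lra.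
Qed.

Lemma cv_plus0 (u v : nat -> R) : Un_cv u 0 -> Un_cv v 0 -> Un_cv (fun n => u n + v n) 0.
Proof. move=> hu hv; have := CV_plus _ _ _ _ hu hv; by rewrite Rplus_0_r. Qed.

Lemma not_cv_io (u : nat -> R) : (forall n, 0 <= u n) -> ~ Un_cv u 0 ->
  exists del, 0 < del /\ forall N, exists n, (N <= n)%nat /\ del <= u n.
Proof.
move=> h0 hn; apply: NNPP => hne; apply: hn => eps heps.
apply: NNPP => hN; apply: hne; exists eps; split => // N.
apply: NNPP => hn2; apply: hN; exists N => n hn.
rewrite /R_dist Rminus_0_r Rabs_pos_eq //.
apply: Rnot_le_lt => hle; apply: hn2; exists n; split => //; lia.
Qed.

Section Prob.
Unset Implicit Arguments.
Variables (S Z Sc : nat -> finType) (P : forall m, S m -> Z m -> R).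
Hypothesis hP : is_pmf P.
Set Implicit Arguments.

Lemma P_ge0 m s z : 0 <= P m s z.
Proof. by case: (hP m) => h _; apply: h. Qed.

Lemma P_sum1 m : sumR (fun w : (S m * Z m)%type => P m w.1 w.2) = 1.
Proof. by case: (hP m). Qed.

Lemma PZ_ge m s z : P m s z <= PZ P z.
Proof. rewrite /PZ; apply: (@sumR_term _ (fun s => P m s z) s) => s'; exact: P_ge0. Qed.

Lemma PZ_sum1 m : sumR (fun z : Z m => PZ P z) = 1.
Proof.
rewrite /PZ sumR_swap -(P_sum1 m) (sumR_pair (fun s z => P m s z)) //.
Qed.

Lemma sumR_chan (W : forall m, Sc m -> S m -> Z m -> R) m (h : (S m * Z m)%type -> R) :
  is_channel W ->
  sumR (fun w : (Sc m * (S m * Z m))%type => W m w.1 w.2.1 w.2.2 * h w.2) = sumR h.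
Proof.
move=> hW; rewrite (sumR_pair (fun c x => W m c x.1 x.2 * h x)) sumR_swap.
apply: sumR_ext => x.
rewrite (sumR_ext (g := fun c => h x * W m c x.1 x.2)); last by move=> c; ring.
rewrite sumR_scal; case: (hW m) => _ ->; ring.
Qed.

Lemma sumR_det m (f : (S m * Z m)%type -> Sc m) (F : (Sc m * (S m * Z m))%type -> R) :
  sumR (fun w : (Sc m * (S m * Z m))%type => if w.1 == f w.2 then F w else 0)
  = sumR (fun x => F (f x, x)).
Proof.
rewrite (sumR_ext (g := fun w => (fun c x => if c == f x then F (c, x) else 0) w.1 w.2));
  last by case.
rewrite (sumR_pair (fun c x => if c == f x then F (c, x) else 0)) sumR_swap.
apply: sumR_ext => x.
rewrite (sumR_ext (g := fun c => if c == f x then F (f x, x) else 0)).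
  by rewrite sumR_single.
by move=> c; case: eqP => // ->.
Qed.

Lemma det_reduce (W : forall m, Sc m -> S m -> Z m -> R) m
  (f : (S m * Z m)%type -> Sc m)
  (hWf : forall c s z, W m c s z = if c == f (s, z) then 1 else 0)
  (H : (Sc m * (S m * Z m))%type -> R -> R) (H0 : forall w, H w 0 = 0) :
  sumR (fun w => H w (Qj P W w)) = sumR (fun x => H (f x, x) (P m x.1 x.2)).
Proof.
rewrite -(sumR_det f (fun w => H w (P m w.2.1 w.2.2))).
apply: sumR_ext => [[c [s z]]]; rewrite /Qj /= hWf.
by case: eqP => _; rewrite ?Rmult_1_l ?Rmult_0_l.
Qed.

End Prob.

Lemma exists_min (T : finType) (f : T -> R) (t0 : T) :
  exists c, forall c', f c <= f c'.
Proof.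
suff [c hc] : exists c, forall c', c' \in enum T -> f c <= f c'.
  by exists c => c'; apply: hc; rewrite mem_enum.
elim: (enum T) => [|a l [c hc]]; first by exists t0.
case: (Rle_dec (f a) (f c)) => h.
- exists a => c'; rewrite inE => /orP [/eqP ->|hl]; first lra.
  have := hc _ hl; lra.
- exists c => c'; rewrite inE => /orP [/eqP ->|hl]; first lra.
  exact: hc.
Qed.

Lemma pick_const (T : finType) (s s' : T) : odflt s [pick x : T] = odflt s' [pick x : T].
Proof. case: pickP => //= h; by have := h s. Qed.

Section Part1.
Unset Implicit Arguments.
Variables (S Z Sc : nat -> finType) (P : forall m, S m -> Z m -> R)
  (d : forall m, S m -> Sc m -> R).
Hypothesis hP : is_pmf P.
Hypothesis hd : forall m s c, 0 <= d m s c.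
Set Implicit Arguments.

Definition ent m (w : (S m * Z m)%type) : R :=
  / INR m * log2 (/ (P m w.1 w.2 / PZ P w.2)).

Lemma Hlow_ent : Hlow P = p_liminf (fun m r => prob_lt (fun w => P m w.1 w.2) (@ent m) r).
Proof. by []. Qed.

Lemma log2_1 : log2 1 = 0.
Proof. by rewrite /log2 ln_1 /Rdiv Rmult_0_l. Qed.

Lemma ent_ge0 m (w : (S m * Z m)%type) : 0 < P m w.1 w.2 -> 0 <= ent w.
Proof.
move=> hp; have hz := PZ_ge hP w.1 w.2.
rewrite /ent -(Rmult_0_r (/ INR m)) -log2_1; apply: dens_mono; first lra.
rewrite -Rinv_1; apply: Rinv_le_contravar.
  apply: Rdiv_lt_0_compat => //; lra.
apply: (Rmult_le_reg_r (PZ P w.2)); first lra.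
rewrite /Rdiv Rmult_assoc Rinv_l; lra.
Qed.

Lemma Hlow_ge0 : ER_le (ERfin 0) (Hlow P).
Proof.
rewrite Hlow_ent /p_liminf; apply: le_ER_sup; exists 0; split => //.
apply: cv_const0 => n; rewrite /prob_lt.
transitivity (sumR (fun _ : (S n * Z n)%type => 0)); last exact: sumR_0.
apply: sumR_ext => w; case: Rlt_dec => // h.
case: (Rle_lt_or_eq_dec _ _ (P_ge0 hP w.1 w.2)) => // hp.
have := ent_ge0 hp; lra.
Qed.

Lemma Dlow_le (W : forall m, Sc m -> S m -> Z m -> R) DE :
  (forall D, DE < D -> exists del, 0 < del /\ forall N, exists m, (N <= m)%nat /\
     prob_ge (Qj P W (m:=m)) (fun w => d m w.2.1 w.1) D <= 1 - del) ->
  ER_le (Dlow P d W) (ERfin DE).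
Proof.
move=> H; rewrite /Dlow; apply: ER_inf_approx => eps heps.
exists (ERfin (DE + eps)); split; last by simpl; lra.
exists (DE + eps); split => //.
have [del [hdel hN]] := H (DE + eps) ltac:(lra).
have hle : ER_le (ER_liminf (fun m => prob_ge (Qj P W (m:=m)) (fun w => d m w.2.1 w.1) (DE + eps)))
              (ERfin (1 - del)).
  rewrite /ER_liminf; apply: ER_sup_le => x [N ->].
  have [m [hm hp]] := hN N.
  apply: ER_le_trans (ER_inf_le _) _; first by exists m; split.
  exact: hp.
split; first by apply: ER_le_trans hle _; simpl; lra.
by move=> heq; rewrite heq /= in hle; lra.
Qed.

End Part1.

Section Part1b.
Unset Implicit Arguments.
Variables (S Z Sc : nat -> finType) (P : forall m, S m -> Z m -> R)
  (d : forall m, S m -> Sc m -> R).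
Hypothesis hP : is_pmf P.
Hypothesis hd : forall m s c, 0 <= d m s c.
Set Implicit Arguments.

Lemma part1_main' DE : ER_le (DEmin' P d) (ERfin DE) -> ER_le (Rlow P d DE) (Hlow P).
Proof.
move=> H; rewrite /DEmin' in H.
have [x0 [[g0 _] _]] := ER_inf_below H (Rlt_plus_1 DE).
have hmin : forall m (s : S m), exists c, forall c', d m s c <= d m s c' :=
  fun m s => exists_min (d m s) (g0 m s).
pose gs m s := proj1_sig (constructive_indefinite_description _ (hmin m s)).
have hgs : forall m s c, d m s (gs m s) <= d m s c :=
  fun m s => proj2_sig (constructive_indefinite_description _ (hmin m s)).
have F1 : forall D, DE < D -> Un_cv (fun m => sumR (fun x : (S m * Z m)%type =>
    if Rle_dec D (d m x.1 (gs m x.1)) then P m x.1 x.2 else 0)) 0.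
  move=> D hD.
  have [x [[g ->] hx]] := ER_inf_below H (ltac:(lra) : DE < (DE + D) / 2).
  rewrite /Dup /p_limsup in hx.
  have [y [[r [-> hr]] hy]] := ER_inf_below hx (ltac:(lra) : (DE + D) / 2 < (DE + 3 * D) / 4).
  simpl in hy.
  apply: cv_squeeze hr => n _; split.
    by apply: sumR_ge0 => w; case: Rle_dec => hh /=; [exact: P_ge0 | lra].
  rewrite /prob_gt.
  rewrite (det_reduce P (W := det_channel g) (f := fun x => g n x.1) (fun c s z => erefl)
             (H := fun w v => if Rlt_dec r (d n w.2.1 w.1) then v else 0)); last first.
    by move=> w /=; case: Rlt_dec.
  apply: sumR_le => w /=.
  case: Rle_dec => h1 /=; case: Rlt_dec => h2 /=.
  + lra.
  + have := hgs n w.1 (g n w.1); lra.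
  + exact: P_ge0.
  + lra.
have Dgs : ER_le (Dlow P d (det_channel (Z := Z) gs)) (ERfin DE).
  apply: Dlow_le => D hD; exists (1/2); split; first lra.
  move=> N; have [N0 hN0] := F1 D hD (1/2) ltac:(lra).
  exists (maxn N N0); split; first exact: leq_maxl.
  have := hN0 (maxn N N0) ltac:(lia).
  rewrite /prob_ge (det_reduce P (W := det_channel gs) (f := fun x => gs (maxn N N0) x.1)
     (fun c s z => erefl)
     (H := fun w v => if Rle_dec D (d (maxn N N0) w.2.1 w.1) then v else 0)); last first.
    by move=> w /=; case: Rle_dec.
  rewrite /R_dist Rminus_0_r => /Rabs_def2 [h1 _] /=; lra.
have HDE : ~ ER_lt (ERfin DE) (DEmin P d).
  move=> [h1 h2]; apply: h2; apply: ER_le_antisym => //.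
  apply: ER_le_trans Dgs; rewrite /DEmin; apply: ER_inf_le; by exists gs.
have H0 := Hlow_ge0 hP.
case Hh : (Hlow P) H0 => [h0| |] H0 /=; last first.
- by [].
- by case: (Rlow P d DE).
rewrite /Rlow; destruct excluded_middle_informative as [hlt|hnlt] => //.
apply: ER_inf_approx => eps heps.
set r := h0 + eps.
have hr : 0 < r by rewrite /r; simpl in H0; lra.
have hnot : ~ Un_cv (fun m => prob_lt (fun w : (S m * Z m)%type => P m w.1 w.2) (@ent S Z P m) r) 0.
  move=> hcv.
  have : ER_le (ERfin r) (Hlow P) by rewrite Hlow_ent /p_liminf; apply: le_ER_sup; exists r.
  rewrite Hh /= /r; lra.
have hge : forall m, 0 <= prob_lt (fun w : (S m * Z m)%type => P m w.1 w.2) (@ent S Z P m) r.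
  by move=> m; apply: sumR_ge0 => w; case: Rlt_dec => hh /=; [exact: P_ge0|lra].
have [del [hdel hio]] := not_cv_io hge hnot.
pose f := fun m (x : (S m * Z m)%type) =>
  if Rlt_dec (ent P x) r then gs m x.1 else gs m (odflt x.1 [pick s' : S m]).
pose W := fun m (c : Sc m) (s : S m) (z : Z m) => if c == f m (s, z) then 1 else 0.
have hW : is_channel W.
  move=> m; split; first by move=> c s z; rewrite /W; case: eqP => hh; lra.
  move=> s z; exact: sumR_single.
have hW0 : forall m c s z, 0 <= W m c s z by move=> m c s z; rewrite /W; case: eqP => hh; lra.
exists (Iup P W); split.
  exists W; split => //; split => //.
  apply: Dlow_le => D hD; exists (del/2); split; first lra.
  move=> N; have [N0 hN0] := F1 D hD (del/2) ltac:(lra).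
  have [n [hn hdn]] := hio (maxn N N0).
  exists n; split; first by apply: leq_trans hn; exact: leq_maxl.
  have hbn := hN0 n ltac:(lia).
  rewrite /R_dist Rminus_0_r in hbn; move/Rabs_def2: hbn => [hb _].
  rewrite /prob_ge (det_reduce P (W:=W) (f := f n) (fun c s z => erefl)
    (H := fun w v => if Rle_dec D (d n w.2.1 w.1) then v else 0)); last first.
    by move=> w /=; case: Rle_dec.
  have hsplit : sumR (fun x : (S n * Z n)%type => if Rlt_dec (ent P x) r then 0 else P n x.1 x.2)
      = 1 - prob_lt (fun w : (S n * Z n)%type => P n w.1 w.2) (@ent S Z P n) r.
    rewrite -(P_sum1 hP n) /prob_lt.
    rewrite (sumR_ext (f := fun w : (S n * Z n)%type => P n w.1 w.2)
      (g := fun w => (if Rlt_dec (ent P w) r then P n w.1 w.2 else 0) +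
                     (if Rlt_dec (ent P w) r then 0 else P n w.1 w.2))); last first.
      by move=> w; case: Rlt_dec => hh /=; lra.
    rewrite sumR_plus Rplus_comm /Rminus Rplus_assoc Rplus_opp_r Rplus_0_r; reflexivity.
  apply: Rle_trans (sumR_le (g := fun x : (S n * Z n)%type =>
     (if Rlt_dec (ent P x) r then 0 else P n x.1 x.2) +
     (if Rle_dec D (d n x.1 (gs n x.1)) then P n x.1 x.2 else 0)) _) _.
    move=> x /=; rewrite /f; case: Rlt_dec => h1 /=; case: Rle_dec => h2 /=;
      try case: Rle_dec => h3 /=; try lra; have := P_ge0 hP x.1 x.2; lra.
  rewrite sumR_plus hsplit.
  apply: Rle_trans (Rplus_le_compat_l _ _ _ (Rlt_le _ _ hb)) _; lra.
rewrite /Iup /p_limsup; apply: ER_inf_le; exists r; split => //.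
pose q := fun n : nat => exp (INR n * (- (r * ln 2))).
have hl2 := ln2_pos.
apply: (cv_squeeze (v := q)); last first.
  apply: cv_exp_neg; have : 0 < r * ln 2 by apply: Rmult_lt_0_compat.
  lra.
move=> n hn; split.
  apply: sumR_ge0 => w; case: Rlt_dec => hh /=; last lra.
  rewrite /Qj; apply: Rmult_le_pos; [exact: hW0 | exact: P_ge0].
rewrite /prob_gt (det_reduce P (W:=W) (f := f n) (fun c s z => erefl)
  (H := fun w v => if Rlt_dec r (/ INR n * log2 (W n w.1 w.2.1 w.2.2 / PcZ P W w.1 w.2.2))
                   then v else 0)); last first.
  by move=> w /=; case: Rlt_dec.
pose X := fun (c : Sc n) (z : Z n) => sumR (fun s : S n => W n c s z * P n s z).
pose beta := fun z : Z n => sumR (fun s : S n => if Rlt_dec (ent P (s, z)) r then 0 else P n s z).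
have hq : 0 < q n by apply: exp_pos.
apply: Rle_trans (sumR_le (g := fun x : (S n * Z n)%type =>
   (if Rlt_dec (ent P x) r then 0 else P n x.1 x.2) *
   (if Rlt_dec (beta x.2) (q n * PZ P x.2) then 1 else 0)) _) _.
  move=> [s z] /=.
  have hW1 : W n (f n (s, z)) s z = 1 by rewrite /W eqxx.
  rewrite hW1.
  have hR : 0 <= (if Rlt_dec (ent P (s, z)) r then 0 else P n s z) *
     (if Rlt_dec (beta z) (q n * PZ P z) then 1 else 0).
    have := P_ge0 hP s z.
    case: (Rlt_dec (ent P (s, z)) r) => h1 /=; case: (Rlt_dec (beta z) (q n * PZ P z)) => h2 /=;
    lra.
  case: (Rle_lt_or_eq_dec _ _ (P_ge0 hP s z)) => hp; last first.
    by case: Rlt_dec => hh /=; lra.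
  have hPZ : 0 < PZ P z by have := PZ_ge hP s z; lra.
  have hXf : P n s z <= X (f n (s, z)) z.
    have h := @sumR_term _ (fun s' => W n (f n (s, z)) s' z * P n s' z) s.
    cbv beta in h; rewrite hW1 Rmult_1_l in h; apply: h => s'.
    apply: Rmult_le_pos; [exact: hW0 | exact: P_ge0].
  have hPc : 0 < PcZ P W (f n (s, z)) z.
    rewrite /PcZ -/(X _ _); apply: Rdiv_lt_0_compat => //; lra.
  have hPcX : PcZ P W (f n (s, z)) z = X (f n (s, z)) z / PZ P z by [].
  case: (Rlt_dec (ent P (s, z)) r) => he.
  - have hle : / INR n * log2 (1 / PcZ P W (f n (s, z)) z) <= ent P (s, z).
      rewrite /ent; apply: dens_mono.
        by apply: Rdiv_lt_0_compat => //; lra.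
      rewrite /Rdiv Rmult_1_l; apply: Rinv_le_contravar.
        by apply: Rdiv_lt_0_compat.
      rewrite hPcX /Rdiv /=; apply: Rmult_le_compat_r => //.
      by apply: Rlt_le; apply: Rinv_0_lt_compat.
    case: Rlt_dec => hh /=; last lra.
    exfalso; lra.
  - have hf0 : forall s', ~ ent P (s', z) < r -> f n (s', z) = f n (s, z).
      move=> s' hs'; rewrite /f /=.
      case: (Rlt_dec (ent P (s', z)) r) => hx1 /=; first by [].
      case: (Rlt_dec (ent P (s, z)) r) => hx2 /=; first by [].
      by rewrite (pick_const s' s).
    have hbeta : beta z <= X (f n (s, z)) z.
      apply: sumR_le => s' /=.
      case: (Rlt_dec (ent P (s', z)) r) => h' /=.
        apply: Rmult_le_pos; [exact: hW0 | exact: P_ge0].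
      have -> : W n (f n (s, z)) s' z = 1 by rewrite /W (hf0 s' h') eqxx.
      lra.
    case: Rlt_dec => hh /=; last first.
      by apply: Rmult_le_pos; [lra | case: Rlt_dec => ? /=; lra].
    have hb1 : 0 < 1 / PcZ P W (f n (s, z)) z by apply: Rdiv_lt_0_compat; lra.
    have hlt := dens_lt hn hb1 hh.
    have hPcq : PcZ P W (f n (s, z)) z < q n.
      rewrite /q; have -> : INR n * - (r * ln 2) = - (INR n * (r * ln 2)) by ring.
      rewrite exp_Ropp -(Rinv_inv (PcZ P W (f n (s, z)) z)).
      apply: Rinv_lt_contravar; last by rewrite /Rdiv Rmult_1_l in hlt.
      apply: Rmult_lt_0_compat; [exact: exp_pos | by apply: Rinv_0_lt_compat].
    have hXq : X (f n (s, z)) z < q n * PZ P z.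
      have -> : X (f n (s, z)) z = PcZ P W (f n (s, z)) z * PZ P z.
        by rewrite hPcX; field; lra.
      by apply: Rmult_lt_compat_r.
    case: (Rlt_dec (beta z) (q n * PZ P z)) => h2 /=; last lra.
    lra.
pose F := fun (s : S n) (z : Z n) =>
   (if Rlt_dec (ent P (s, z)) r then 0 else P n s z) *
   (if Rlt_dec (beta z) (q n * PZ P z) then 1 else 0).
have -> : sumR (fun x : (S n * Z n)%type =>
   (if Rlt_dec (ent P x) r then 0 else P n x.1 x.2) *
   (if Rlt_dec (beta x.2) (q n * PZ P x.2) then 1 else 0)) =
   sumR (fun s => sumR (fun z => F s z)).
  by rewrite -(sumR_pair F); apply: sumR_ext => -[s z].
rewrite sumR_swap.
apply: Rle_trans (sumR_le (g := fun z => q n * PZ P z) _) _.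
  move=> z /=.
  rewrite (sumR_ext (g := fun s => (if Rlt_dec (beta z) (q n * PZ P z) then 1 else 0) *
     (if Rlt_dec (ent P (s, z)) r then 0 else P n s z))); last by move=> s; rewrite /F; ring.
  rewrite sumR_scal -/(beta z).
  have hPZ0 : 0 <= PZ P z by apply: sumR_ge0 => s; exact: P_ge0.
  case: Rlt_dec => h2 /=; first lra.
  rewrite Rmult_0_l; apply: Rmult_le_pos; lra.
rewrite sumR_scal (PZ_sum1 hP n); lra.
Qed.
End Part1b.

Section Part2.
Unset Implicit Arguments.
Variables (S Z : nat -> finType) (P : forall m, S m -> Z m -> R).
Hypothesis hP : is_pmf P.
Set Implicit Arguments.

Lemma part2_le : ER_le (Rlow P (hamming (S := S)) 0) (Hlow P).
Proof.
apply: (part1_main' hP).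
rewrite /DEmin'; apply: ER_le_trans (ER_inf_le _) _.
  by exists (fun m (s : S m) => s).
rewrite /Dup /p_limsup; apply: (ER_le_trans (y := ERfin 0)); last by simpl; lra.
apply: ER_inf_le; exists 0; split => //; apply: cv_const0 => n.
rewrite /prob_gt (det_reduce P (W := det_channel (Z := Z) (fun m (s : S m) => s))
  (f := fun x => x.1) (fun c s z => erefl)
  (H := fun w v => if Rlt_dec 0 (hamming w.2.1 w.1) then v else 0)); last first.
  by move=> w /=; case: Rlt_dec.
transitivity (sumR (fun _ : (S n * Z n)%type => 0)); last exact: sumR_0.
apply: sumR_ext => x /=; rewrite /hamming eqxx; case: Rlt_dec => hh /=; lra.
Qed.

Lemma Qj_sum1 (W : forall m, S m -> S m -> Z m -> R) m : is_channel W ->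
  sumR (fun w : (S m * (S m * Z m))%type => Qj P W w) = 1.
Proof.
move=> hW; rewrite -(P_sum1 hP m).
exact: (sumR_chan (fun x : (S m * Z m)%type => P m x.1 x.2) hW).
Qed.

Lemma Qj_ge0 (W : forall m, S m -> S m -> Z m -> R) m (w : (S m * (S m * Z m))%type) :
  is_channel W -> 0 <= Qj P W w.
Proof.
move=> hW; rewrite /Qj; apply: Rmult_le_pos; last exact: P_ge0.
by case: (hW m) => h _; apply: h.
Qed.

Lemma part2_ge : ER_le (Hlow P) (Rlow P (hamming (S := S)) 0).
Proof.
rewrite /Rlow; destruct excluded_middle_informative as [hlt|hnlt].
  by case: (Hlow P).
apply: le_ER_inf => x [W [hW [hD ->]]].
rewrite /Iup /p_limsup; apply: le_ER_inf => y [r [-> hr]].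
rewrite Hlow_ent /p_liminf; apply: ER_sup_le => x' [t [-> ht]] /=.
apply: Rnot_lt_le => hrt.
rewrite /Dlow in hD.
have [zz [[D' [-> hlim]] hz]] := ER_inf_below hD (ltac:(lra) : 0 < 1/2).
simpl in hz.
have hl2 := ln2_pos.
pose K := fun n : nat => exp (INR n * ((r - t) * ln 2)).
pose E := fun n : nat => sumR (fun w : (S n * (S n * Z n))%type =>
   if w.1 == w.2.1 then Qj P W w else 0).
have hE : Un_cv E 0.
  apply: (cv_squeeze (v := fun n =>
    (prob_gt (Qj P W (m:=n))
      (fun w => / INR n * log2 (W n w.1 w.2.1 w.2.2 / PcZ P W w.1 w.2.2)) r +
     prob_lt (fun w : (S n * Z n)%type => P n w.1 w.2) (ent P (m:=n)) t) + K n)); last first.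
    apply: cv_plus0; first exact: cv_plus0.
    apply: cv_exp_neg; have : 0 < (t - r) * ln 2 by apply: Rmult_lt_0_compat; lra.
    lra.
  move=> n hn; split.
    apply: sumR_ge0 => w; case: eqP => hh; [exact: Qj_ge0 | lra].
  pose X := fun (c : S n) (z : Z n) => sumR (fun s : S n => W n c s z * P n s z).
  have hK : 0 < K n by apply: exp_pos.
  have hW0 : forall c s z, 0 <= W n c s z by move=> c s z; case: (hW n) => h _; apply: h.
  have hX0 : forall c z, 0 <= X c z.
    by move=> c z; apply: sumR_ge0 => s; apply: Rmult_le_pos; [exact: hW0 | exact: P_ge0].
  pose iw := fun w : (S n * (S n * Z n))%type =>
    / INR n * log2 (W n w.1 w.2.1 w.2.2 / PcZ P W w.1 w.2.2).
  apply: Rle_trans (sumR_le (g := fun w : (S n * (S n * Z n))%type =>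
     ((if Rlt_dec r (iw w) then Qj P W w else 0) +
      (if Rlt_dec (ent P w.2) t then Qj P W w else 0)) +
     (if w.1 == w.2.1 then K n * X w.1 w.2.2 else 0)) _) _.
    move=> [c [s z]] /=.
    have hq := Qj_ge0 (c, (s, z)) hW.
    case: eqP => hcs /=; last first.
      by case: Rlt_dec => h1 /=; case: Rlt_dec => h2 /=; lra.
    have hKX : 0 <= K n * X c z by apply: Rmult_le_pos; [lra | exact: hX0].
    case: Rlt_dec => h1 /=; first by case: Rlt_dec => h2 /=; lra.
    case: Rlt_dec => h2 /=; first lra.
    rewrite Rplus_0_l Rplus_0_l.
    rewrite /Qj /=.
    case: (Rle_lt_or_eq_dec _ _ (hW0 c s z)) => hw; last by rewrite -hw Rmult_0_l.
    case: (Rle_lt_or_eq_dec _ _ (P_ge0 hP s z)) => hp; last by rewrite -hp Rmult_0_r.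
    have hPZ : 0 < PZ P z by have := PZ_ge hP s z; lra.
    have hXp : W n c s z * P n s z <= X c z.
      have h := @sumR_term _ (fun s' => W n c s' z * P n s' z) s.
      cbv beta in h; apply: h => s'; apply: Rmult_le_pos; [exact: hW0 | exact: P_ge0].
    have hXpos : 0 < X c z by have := Rmult_lt_0_compat _ _ hw hp; lra.
    have hPc : PcZ P W c z = X c z / PZ P z by [].
    have hPcpos : 0 < PcZ P W c z by rewrite hPc; apply: Rdiv_lt_0_compat.
    have hi : W n c s z / PcZ P W c z <= exp (INR n * (r * ln 2)).
      apply: dens_le => //; first by apply: Rdiv_lt_0_compat.
      exact: Rnot_lt_le.
    have he : exp (INR n * (t * ln 2)) <= / (P n s z / PZ P z).
      apply: dens_ge => //.
        by apply: Rinv_0_lt_compat; apply: Rdiv_lt_0_compat.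
      exact: Rnot_lt_le.
    have hW1 : W n c s z <= exp (INR n * (r * ln 2)) * PcZ P W c z.
      have := Rmult_le_compat_r _ _ _ (Rlt_le _ _ hPcpos) hi.
      by rewrite /Rdiv Rmult_assoc Rinv_l ?Rmult_1_r //; lra.
    have hP1 : P n s z <= / exp (INR n * (t * ln 2)) * PZ P z.
      have hE1 := exp_pos (INR n * (t * ln 2)).
      have := Rinv_le_contravar _ _ hE1 he.
      rewrite Rinv_inv => h.
      have := Rmult_le_compat_r _ _ _ (Rlt_le _ _ hPZ) h.
      by rewrite /Rdiv Rmult_assoc Rinv_l ?Rmult_1_r //; lra.
    apply: Rle_trans (Rmult_le_compat _ _ _ _ (Rlt_le _ _ hw) (Rlt_le _ _ hp) hW1 hP1) _.
    right; rewrite /K hPc.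
    have -> : INR n * ((r - t) * ln 2) = INR n * (r * ln 2) + - (INR n * (t * ln 2)) by ring.
    rewrite exp_plus exp_Ropp; field.
    split; [apply: Rgt_not_eq; exact: exp_pos | lra].
  rewrite sumR_plus sumR_plus.
  apply: Rplus_le_compat; first apply: Rplus_le_compat.
  - by right.
  - right; rewrite /prob_lt.
    rewrite (sumR_ext (g := fun w : (S n * (S n * Z n))%type => W n w.1 w.2.1 w.2.2 *
       (fun x : (S n * Z n)%type => if Rlt_dec (ent P x) t then P n x.1 x.2 else 0) w.2)).
      exact: (sumR_chan _ hW).
    by move=> w /=; case: Rlt_dec => hh /=; rewrite /Qj; ring.
  - right.
    transitivity (sumR (fun c : S n => sumR (fun x : (S n * Z n)%type =>
        if c == x.1 then K n * X c x.2 else 0))).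
      rewrite -(sumR_pair (fun c (x : (S n * Z n)%type) => if c == x.1 then K n * X c x.2 else 0)).
      by apply: sumR_ext => -[c [s z]].
    rewrite (sumR_ext (g := fun c : S n => K n * sumR (fun z : Z n => X c z))); last first.
      move=> c; rewrite (sumR_pair (fun (s : S n) (z : Z n) => if c == s then K n * X c z else 0)).
      rewrite (sumR_ext (g := fun s => if s == c then sumR (fun z => K n * X c z) else 0)); last first.
        move=> s; case: (eqVneq s c) => [hsc|hne] /=; first by [].
        exact: sumR_0.
      by rewrite sumR_single sumR_scal.
    rewrite sumR_scal.
    have hX1 : sumR (fun c => sumR (fun z => X c z)) = 1.
      rewrite -(Qj_sum1 n hW) (sumR_pair (fun c (x : (S n * Z n)%type) => W n c x.1 x.2 * P n x.1 x.2)).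
      apply: sumR_ext => c.
      by rewrite (sumR_pair (fun s z => W n c s z * P n s z)) sumR_swap.
    rewrite hX1; ring.
pose a := fun m => prob_ge (Qj P W (m:=m)) (fun w => hamming w.2.1 w.1) D'.
have haE : forall m, 1 - E m <= a m.
  move=> m.
  have h : sumR (fun w : (S m * (S m * Z m))%type => Qj P W w) <= a m + E m.
    rewrite /a /E /prob_ge -sumR_plus; apply: sumR_le => w /=.
    have hq := Qj_ge0 w hW.
    case: eqP => hcs /=.
      by case: Rle_dec => hh /=; lra.
    rewrite /hamming.
    have -> : (w.2.1 == w.1) = false by apply/eqP => hh; apply: hcs; rewrite hh.
    by case: Rle_dec => hh /=; lra.
  rewrite (Qj_sum1 m hW) in h; lra.
have h1 : ER_le (ERfin 1) (ER_liminf a).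
  rewrite /ER_liminf; apply: ER_sup_approx => eps heps.
  have [N hN] := hE eps heps.
  exists (ER_inf (fun y => exists m, (N <= m)%nat /\ y = ERfin (a m))); split; first by exists N.
  apply: le_ER_inf => yy [m [hm ->]] /=.
  have := hN m ltac:(lia).
  rewrite /R_dist Rminus_0_r => /Rabs_def2 [hE1 _].
  have := haE m; lra.
case: hlim => hle hne; apply: hne; exact: ER_le_antisym hle h1.
Qed.

End Part2.

Unset Implicit Arguments.

Theorem proposition1 :
  (forall (S Z Sc : nat -> finType) (P : forall m, S m -> Z m -> R)
          (d : forall m, S m -> Sc m -> R),
     is_pmf P ->
     (forall m s c, 0 <= d m s c) ->
     forall DE : R, ER_le (DEmin' P d) (ERfin DE) ->
     ER_le (Rlow P d DE) (Hlow P))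
  /\
  (forall (S Z : nat -> finType) (P : forall m, S m -> Z m -> R),
     is_pmf P ->
     Rlow P (hamming (S := S)) 0 = Hlow P).
Proof.
split.
- move=> S Z Sc P d hP hd DE H; exact: (part1_main' hP H).
- move=> S Z P hP; apply: ER_le_antisym; [exact: part2_le | exact: part2_ge].
Qed.
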